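(* Let $H$ be a dephased complex Hadamard matrix of order $6$ such that some row other than the first, or some column other than the first, consists entirely of cube roots of unity. Then either $H$ is equivalent to the matrix $S_6^{(0)}$, or $H$ belongs to the family $K_6^{(3)}$.
   Context: A complex Hadamard matrix of order $n$ is an $n\times n$ complex matrix with all entries of modulus $1$ satisfying $HH^\ast=nI_n$; it is dephased if its first row and column consist of $1$'s, and its core is its lower right $(n-1)\times(n-1)$ submatrix. $H$ and $K$ are equivalent if $K=P_1D_1HD_2P_2$ with $P_i$ permutation matrices and $D_i$ diagonal unitary matrices. A $6\times 6$ complex Hadamard matrix belongs to the family $K_6^{(3)}$ if it is equivalent to a dephased complex Hadamard matrix whose core contains an entry $-1$. With $\omega=e^{2\pi i/3}$, \[S_6^{(0)}=\begin{bmatrix}1&1&1&1&1&1\\1&1&\omega&\omega^2&\omega^2&\omega\\1&\omega&1&\omega&\omega^2&\omega^2\\1&\omega^2&\omega&1&\omega&\omega^2\\1&\omega^2&\omega^2&\omega&1&\omega\\1&\omega&\omega^2&\omega^2&\omega&1\end{bmatrix}.\] *)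

(* Defs.v *)
(* Complex numbers are modelled by an arbitrary
   numClosedFieldType C. *)
From HB Require Import structures.
From mathcomp Require Import all_boot all_order all_algebra all_fingroup.
Set Implicit Arguments. Unset Strict Implicit. Unset Printing Implicit Defensive.
Import Order.TTheory GRing.Theory Num.Theory.
Local Open Scope ring_scope.

Definition adjmx (C : numClosedFieldType) m n (A : 'M[C]_(m, n)) : 'M[C]_(n, m) :=
  (map_mx Num.conj A)^T.

Definition complex_hadamard (C : numClosedFieldType) n (H : 'M[C]_n) : Prop :=
  (forall i j, `|H i j| = 1) /\ H *m adjmx H = (n%:R)%:M.

Definition dephased (C : numClosedFieldType) n (H : 'M[C]_n.+1) : Prop :=
  forall i, H ord0 i = 1 /\ H i ord0 = 1.

Definition diag_unitary (C : numClosedFieldType) n (D : 'M[C]_n) : Prop :=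
  exists d : 'rV[C]_n, (forall i, `|d 0 i| = 1) /\ D = diag_mx d.

Definition hadamard_equiv (C : numClosedFieldType) n (H K : 'M[C]_n) : Prop :=
  exists (s1 s2 : 'S_n) (D1 D2 : 'M[C]_n),
    diag_unitary D1 /\ diag_unitary D2 /\
    K = perm_mx s1 *m D1 *m H *m D2 *m perm_mx s2.

Definition in_K6_3 (C : numClosedFieldType) (H : 'M[C]_6) : Prop :=
  exists K : 'M[C]_6, complex_hadamard K /\ dephased K /\ hadamard_equiv H K /\
    exists i j : 'I_6, i != ord0 /\ j != ord0 /\ K i j = -1.

(* omega = e^{2 pi i / 3} = (-1 + i sqrt 3) / 2 *)
Definition omega (C : numClosedFieldType) : C := (-1 + 'i * sqrtC 3) / 2.

Definition S6_exps : seq (seq nat) :=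
  [:: [:: 0; 0; 0; 0; 0; 0];
      [:: 0; 0; 1; 2; 2; 1];
      [:: 0; 1; 0; 1; 2; 2];
      [:: 0; 2; 1; 0; 1; 2];
      [:: 0; 2; 2; 1; 0; 1];
      [:: 0; 1; 2; 2; 1; 0]]%N.

Definition S6_0 (C : numClosedFieldType) : 'M[C]_6 :=
  \matrix_(i < 6, j < 6) (omega C) ^+ (nth 0%N (nth [::] S6_exps i) j).

(* Main.v *)
Require Import Defs.
From HB Require Import structures.
From mathcomp Require Import all_boot all_order all_algebra all_fingroup.
From mathcomp Require Import ring zify.
From Stdlib Require Import Lia.
Import Order.TTheory GRing.Theory Num.Theory.
Local Open Scope ring_scope.

Lemma w_root (C : numClosedFieldType) : omega C ^+ 2 + omega C + 1 = 0.
Proof.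
rewrite /omega.
have h3 := sqrtCK (3 : C). have hi := sqrCi C.
have h2 : (2 : C) != 0 by rewrite pnatr_eq0.
rewrite expr2 in h3; rewrite expr2 in hi.
set s := sqrtC 3 in h3 *.
have h4 : (4 : C) != 0 by rewrite pnatr_eq0.
have -> : ((-1 + 'i * s) / 2) ^+ 2 + (-1 + 'i * s) / 2 + 1 = (3 + ('i * 'i) * (s * s)) / 4.
  by field.
rewrite h3 hi; apply/eqP; rewrite mulf_eq0; apply/orP; left; apply/eqP; ring.
Qed.

Lemma w3 (C : numClosedFieldType) : omega C ^+ 3 = 1.
Proof.
have h := w_root C.
have -> : omega C ^+ 3 = (omega C - 1) * (omega C ^+ 2 + omega C + 1) + 1 by ring.
by rewrite h mulr0 add0r.
Qed.

Lemma w_neq1 (C : numClosedFieldType) : omega C != 1.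
Proof.
apply/eqP => e; have := w_root C; rewrite e expr1n.
by move/eqP; rewrite -[1 + 1 + 1](natrD _ 2 1) pnatr_eq0.
Qed.

Lemma w_neq0 (C : numClosedFieldType) : omega C != 0.
Proof. apply/eqP => e; have := w3 C; rewrite e expr0n /= => /eqP; by rewrite eq_sym oner_eq0. Qed.

Lemma w2_neq1 (C : numClosedFieldType) : omega C ^+ 2 != 1.
Proof.
apply/eqP => e; have := w3 C; rewrite exprS e mulr1 => e1.
by have := w_neq1 C; rewrite e1 eqxx.
Qed.

Lemma w_neq_w2 (C : numClosedFieldType) : omega C != omega C ^+ 2.
Proof.
apply/eqP => e; have := w3 C; rewrite exprS -e -expr2 => e1.
by have := w2_neq1 C; rewrite e1 eqxx.
Qed.

Lemma norm_w (C : numClosedFieldType) : `|omega C| = 1.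
Proof.
have := w3 C; move/(congr1 (fun x => `|x|)); rewrite normrX normr1.
by move/eqP; rewrite pexpr_eq1 // => /eqP.
Qed.

Lemma conj_unit (C : numClosedFieldType) (z : C) : `|z| = 1 -> z^* = z^-1.
Proof. by move=> h; rewrite invC_norm h expr1n invr1 mul1r. Qed.

Lemma conj_w (C : numClosedFieldType) : (omega C)^* = omega C ^+ 2.
Proof.
rewrite conj_unit ?norm_w //.
apply: (mulfI (w_neq0 C)); rewrite divff ?w_neq0 // -exprS w3 //.
Qed.

Lemma conj_w2 (C : numClosedFieldType) : (omega C ^+ 2)^* = omega C.
Proof.
rewrite conj_unit ?normrX ?norm_w ?expr1n //.
have h2 : omega C ^+ 2 != 0 by rewrite expf_neq0 // w_neq0.
apply: (mulfI h2); rewrite divff // -exprSr w3 //.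
Qed.

Lemma cube_root (C : numClosedFieldType) (z : C) : z ^+ 3 = 1 ->
  z = 1 \/ z = omega C \/ z = omega C ^+ 2.
Proof.
move=> h.
have : (z - 1) * ((z - omega C) * (z - omega C ^+ 2)) = 0.
  have -> : (z - 1) * ((z - omega C) * (z - omega C ^+ 2)) =
     z ^+ 3 - 1 - (z ^+ 2 - z) * (omega C ^+ 2 + omega C + 1) + (z - 1) * omega C ^+ 3 - (z - 1)
     by ring.
  by rewrite h w_root w3; ring.
move/eqP; rewrite !mulf_eq0 !subr_eq0 => /orP[/eqP->|/orP[/eqP->|/eqP->]]; tauto.
Qed.

Definition T (C : numClosedFieldType) n (H : 'M[C]_n) (s t : 'S_n) (u v : 'I_n -> C) : 'M[C]_n :=
  \matrix_(i, j) (u i * H (s i) (t j) * v j).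
Arguments T {C n}.

Lemma PDHDP_E (C : numClosedFieldType) n (H : 'M[C]_n) (s s2 : 'S_n) (d1 d2 : 'rV[C]_n) :
  perm_mx s *m diag_mx d1 *m H *m diag_mx d2 *m perm_mx s2 =
  \matrix_(i, j) (d1 0 (s i) * H (s i) ((s2^-1)%g j) * d2 0 ((s2^-1)%g j)).
Proof.
rewrite -[s2]invgK -col_permE -!mulmxA -row_permE mul_diag_mx mul_mx_diag.
apply/matrixP => i j; rewrite !mxE !invgK; ring.
Qed.

Lemma equiv_T (C : numClosedFieldType) n (H : 'M[C]_n) s t (u v : 'I_n -> C) :
  (forall i, `|u i| = 1) -> (forall j, `|v j| = 1) -> hadamard_equiv H (T H s t u v).
Proof.
move=> hu hv.
exists s, (t^-1)%g, (diag_mx (\row_i u ((s^-1)%g i))), (diag_mx (\row_j v ((t^-1)%g j))).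
split; first by exists (\row_i u ((s^-1)%g i)); split => // i; rewrite mxE.
split; first by exists (\row_j v ((t^-1)%g j)); split => // i; rewrite mxE.
rewrite PDHDP_E; apply/matrixP => i j; rewrite !mxE invgK permK.
by rewrite permK.
Qed.

Lemma T_of_equiv (C : numClosedFieldType) n (H K : 'M[C]_n) :
  hadamard_equiv H K -> exists s t (u v : 'I_n -> C),
  [/\ (forall i, `|u i| = 1), (forall j, `|v j| = 1) & K = T H s t u v].
Proof.
move=> [s1 [s2 [D1 [D2 [[d1 [hd1 ->]] [[d2 [hd2 ->]] ->]]]]]].
exists s1, (s2^-1)%g, (fun i => d1 0 (s1 i)), (fun j => d2 0 ((s2^-1)%g j)); split => //.
by rewrite PDHDP_E; apply/matrixP => i j; rewrite !mxE.
Qed.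

Lemma T_T (C : numClosedFieldType) n (H : 'M[C]_n) s t u v s' t' u' v' :
  T (T H s t u v) s' t' u' v' =
  T H (s' * s)%g (t' * t)%g (fun i => u' i * u (s' i)) (fun j => v (t' j) * v' j).
Proof. by apply/matrixP => i j; rewrite !mxE !permM; ring. Qed.

Lemma T_tr (C : numClosedFieldType) n (H : 'M[C]_n) s t u v :
  (T H s t u v)^T = T H^T t s v u.
Proof. by apply/matrixP => i j; rewrite !mxE; ring. Qed.

Lemma had_entries (C : numClosedFieldType) n (H : 'M[C]_n) :
  H *m adjmx H = (n%:R)%:M <->
  (forall i l, \sum_j H i j * (H l j)^* = (n%:R) *+ (i == l)).
Proof.
split.
  by move=> h i l; have := congr1 (fun M : 'M[C]_n => M i l) h; rewrite !mxE => <-;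
     apply: eq_bigr => j _; rewrite !mxE.
move=> h; apply/matrixP => i l; rewrite !mxE -h.
by apply: eq_bigr => j _; rewrite !mxE.
Qed.

Lemma had_T (C : numClosedFieldType) n (H : 'M[C]_n) s t (u v : 'I_n -> C) :
  (forall i, `|u i| = 1) -> (forall j, `|v j| = 1) ->
  complex_hadamard H -> complex_hadamard (T H s t u v).
Proof.
move=> hu hv [hn ho]; split.
  by move=> i j; rewrite !mxE !normrM hu hv hn !mul1r.
move/had_entries: ho => ho; apply/had_entries => i l.
have -> : \sum_j T H s t u v i j * (T H s t u v l j)^* =
   u i * (u l)^* * \sum_j H (s i) (t j) * (H (s l) (t j))^*.
  rewrite mulr_sumr; apply: eq_bigr => j _; rewrite !mxE !rmorphM /=.
  have : v j * (v j)^* = 1 by rewrite -normCK hv expr1n.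
  move=> e; rewrite -[_ * _ * (_^* * _ * _)]/(_) .
  transitivity (u i * (u l)^* * (H (s i) (t j) * (H (s l) (t j))^*) * (v j * (v j)^*)); first by ring.
  by rewrite e mulr1.
have -> : \sum_j H (s i) (t j) * (H (s l) (t j))^* = \sum_j H (s i) j * (H (s l) j)^* by rewrite [RHS](reindex_perm t).
rewrite ho (inj_eq perm_inj).
case: (eqVneq i l) => [->|_]; last by rewrite !mulr0n mulr0.
by rewrite -normCK hu expr1n mul1r.
Qed.

Lemma had_tr (C : numClosedFieldType) n (H : 'M[C]_n) :
  complex_hadamard H -> complex_hadamard H^T.
Proof.
move=> [hn ho]; split; first by move=> i j; rewrite mxE hn.
case: n H hn ho => [|n] H hn ho; first by apply/matrixP => i; case: i.
have hn0 : (n.+1%:R : C) != 0 by rewrite pnatr_eq0.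
have h1 : H *m ((n.+1%:R)^-1 *: adjmx H) = 1%:M.
  by rewrite -scalemxAr ho -scalemx1 scalerA mulVf // scale1r.
have h2 := mulmx1C h1.
have h3 : adjmx H *m H = (n.+1%:R)%:M.
  move: h2; rewrite -scalemxAl => h2.
  have := congr1 (fun M : 'M[C]_n.+1 => (n.+1%:R : C) *: M) h2; rewrite scalerA divff // scale1r => ->.
  by rewrite scalemx1.
have -> : adjmx H^T = (adjmx H)^T.
  apply/matrixP => i j; by rewrite !mxE.
by rewrite -trmx_mul h3 tr_scalar_mx.
Qed.

Arguments cube_root {C z}.
Lemma card_sum (b : pred 'I_6) : (\sum_j (b j : nat))%N = #|[set j | b j]|.
Proof. rewrite -sum1_card [RHS]big_mkcond /=; apply: eq_bigr => j _; by rewrite inE; case: (b j). Qed.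

Lemma neq_of_f (T : eqType) (f : 'I_6 -> T) a b : f a != f b -> a != b.
Proof. by apply: contraNneq => ->. Qed.

Ltac wneq := first [exact: w_neq1 | exact: w2_neq1 | exact: w_neq_w2
   | rewrite eq_sym; first [exact: w_neq1 | exact: w2_neq1 | exact: w_neq_w2]].

Lemma wfacts (C : numClosedFieldType) :
  (1 == omega C) = false /\ (1 == omega C ^+ 2) = false /\ (omega C == 1) = false /\
     (omega C == omega C ^+ 2) = false /\ (omega C ^+ 2 == 1) = false /\ (omega C ^+ 2 == omega C) = false.
Proof.
have a := w_neq1 C; have b := w2_neq1 C; have c := w_neq_w2 C.
do !split; apply/negbTE; rewrite // eq_sym //.
Qed.

Lemma ind3 (C : numClosedFieldType) (v : C) : v ^+ 3 = 1 ->
  v = (v == 1)%:R + (v == omega C)%:R * omega C + (v == omega C ^+ 2)%:R * omega C ^+ 2.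
Proof.
have [a [b [c [d [e f]]]]] := wfacts C.
case/cube_root => [->|[->|->]]; rewrite eqxx ?a ?b ?c ?d ?e ?f /=; ring.
Qed.

Lemma ind3n (C : numClosedFieldType) (v : C) : v ^+ 3 = 1 ->
  (nat_of_bool (v == 1%R :> C) + (v == omega C) + (v == (omega C ^+ 2)%R) = 1)%N.
Proof.
have [a [b [c [d [e f]]]]] := wfacts C.
by case/cube_root => [->|[->|->]]; rewrite eqxx ?a ?b ?c ?d ?e ?f.
Qed.

Lemma jcD (C : numClosedFieldType) (x y : C) : (x + y)^* = x^* + y^*.
Proof. exact: rmorphD. Qed.
Lemma jcM (C : numClosedFieldType) (x y : C) : (x * y)^* = x^* * y^*.
Proof. exact: rmorphM. Qed.
Arguments jcM {C}.
Lemma jcN (C : numClosedFieldType) (x : C) : (- x)^* = - x^*.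
Proof. exact: rmorphN. Qed.
Lemma jc0 (C : numClosedFieldType) : (0 : C)^* = 0.
Proof. exact: rmorph0. Qed.
Lemma jc1 (C : numClosedFieldType) : (1 : C)^* = 1.
Proof. exact: rmorph1. Qed.

Lemma row_struct (C : numClosedFieldType) (z : 'I_6 -> C) :
  z ord0 = 1 -> (forall j, z j ^+ 3 = 1) -> \sum_j z j = 0 ->
  exists j1 k k' m m' : 'I_6, uniq [:: ord0; j1; k; k'; m; m'] /\
   [/\ z j1 = 1, z k = omega C, z k' = omega C, z m = omega C ^+ 2 & z m' = omega C ^+ 2].
Proof.
move=> z0 z3 zs.
set w := omega C.
set c0 := #|[set j | z j == 1]|; set c1 := #|[set j | z j == w]|; set c2 := #|[set j | z j == w ^+ 2]|.
have hz : forall j, z j = (z j == 1)%:R + (z j == w)%:R * w + (z j == w ^+ 2)%:R * w ^+ 2.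
  by move=> j; apply: ind3.
have hc : (c0 + c1 + c2 = 6)%N.
  have : (\sum_(j < 6) 1 = 6)%N by rewrite sum1_card card_ord.
  move=> <-; rewrite /c0 /c1 /c2 -!card_sum -!big_split /=.
  by apply: eq_bigr => j _; rewrite ind3n.
have hs : c0%:R + c1%:R * w + c2%:R * w ^+ 2 = 0 :> C.
  rewrite -zs (eq_bigr _ (fun j _ => hz j)) !big_split /= -!mulr_suml.
  by rewrite /c0 /c1 /c2 -!card_sum !natr_sum.
have hs' : c0%:R + c1%:R * w ^+ 2 + c2%:R * w = 0 :> C.
  have h : (c0%:R + c1%:R * w + c2%:R * w ^+ 2)^* = 0^* by rewrite hs.
  by rewrite !jcD (jcM (c1%:R : C)) (jcM (c2%:R : C)) !conjC_nat /w conj_w conj_w2 jc0 in h.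
have e12 : c1 = c2.
  have : (c1%:R - c2%:R) * (w - w ^+ 2) = 0 :> C.
    by rewrite -[RHS](subrr 0) -{1}hs -hs'; ring.
  move/eqP; rewrite mulf_eq0 subr_eq0 eqr_nat subr_eq0 (negPf (w_neq_w2 C)) orbF.
  by move/eqP.
have e01 : c0 = c1.
  have : (c0%:R - c1%:R) = 0 :> C.
    rewrite -e12 in hs.
    have -> : (c0%:R - c1%:R : C) = (c0%:R + c1%:R * w + c1%:R * w ^+ 2) - c1%:R * (w ^+ 2 + w + 1) by ring.
    by rewrite hs /w w_root mulr0 subr0.
  by move/eqP; rewrite subr_eq0 eqr_nat => /eqP.
have [h0 [h1 h2]] : [/\ c0 == 2, c1 == 2 & c2 == 2]%N.
  have c02 : c0 = 2%N by lia.
  by rewrite -e12 -e01 c02.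
case/cards2P: h0 => a [b [ab eA]].
case/cards2P: h1 => k [k' [kk eK]].
case/cards2P: h2 => m [m' [mm eM]].
have hA : forall x, (z x == 1) = (x == a) || (x == b).
  by move=> x; have := congr1 (fun S : {set 'I_6} => x \in S) eA; rewrite /= !inE.
have hK : forall x, (z x == w) = (x == k) || (x == k').
  by move=> x; have := congr1 (fun S : {set 'I_6} => x \in S) eK; rewrite /= !inE.
have hM : forall x, (z x == w ^+ 2) = (x == m) || (x == m').
  by move=> x; have := congr1 (fun S : {set 'I_6} => x \in S) eM; rewrite /= !inE.
have zk : z k = w by apply/eqP; rewrite hK eqxx.
have zk' : z k' = w by apply/eqP; rewrite hK eqxx orbT.
have zm : z m = w ^+ 2 by apply/eqP; rewrite hM eqxx.
have zm' : z m' = w ^+ 2 by apply/eqP; rewrite hM eqxx orbT.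
have [j1 [zj1 j10]] : exists j1, z j1 = 1 /\ j1 != ord0.
  have := hA ord0; rewrite z0 eqxx => /esym/orP[/eqP ea|/eqP eb].
  - exists b; split; first by apply/eqP; rewrite hA eqxx orbT.
    by rewrite ea eq_sym.
  - exists a; split; first by apply/eqP; rewrite hA eqxx.
    by rewrite eb.
exists j1, k, k', m, m'; split => //.
rewrite /= !inE !negb_or.
have F : forall x y, z x != z y -> x != y by move=> x y; apply: neq_of_f.
repeat (apply/andP; split) => //; try by rewrite eq_sym.
all: apply: F; rewrite ?z0 ?zj1 ?zk ?zk' ?zm ?zm'; wneq.
Qed.

Arguments conj_unit {C z}.
Ltac fld := field; rewrite ?andbT ?andTb; repeat (apply/andP; split); try assumption.

Lemma unit_neq0 (C : numClosedFieldType) (x : C) : `|x| = 1 -> x != 0.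
Proof. by move=> h; rewrite -normr_eq0 h oner_eq0. Qed.
Arguments unit_neq0 {C x}.

Lemma block_lemma (C : numClosedFieldType) (S P Q : C) :
  S + P + Q = 0 -> S + omega C ^+ 2 * P + omega C * Q = 0 ->
  P = omega C ^+ 2 * S /\ Q = omega C * S.
Proof.
move=> e1 e2.
have h : (1 - omega C) * (S - omega C * P) = 0.
  have -> : (1 - omega C) * (S - omega C * P) =
     (S + omega C ^+ 2 * P + omega C * Q) - omega C * (S + P + Q) by ring.
  by rewrite e1 e2 mulr0 subr0.
move/eqP: h; rewrite mulf_eq0 subr_eq0 eq_sym (negPf (w_neq1 C)) /= subr_eq0 => /eqP hS.
have hw := w3 C; have hr := w_root C.
have hP : P = omega C ^+ 2 * S.
  by rewrite hS mulrA -exprSr hw mul1r.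
split => //.
have -> : Q = - S - P.
  have -> : Q = (S + P + Q) - S - P by ring.
  by rewrite e1 sub0r.
rewrite hP.
have -> : - S - omega C ^+ 2 * S = omega C * S - S * (omega C ^+ 2 + omega C + 1) by ring.
by rewrite hr mulr0 subr0.
Qed.

Lemma pair_lemma (C : numClosedFieldType) (y z u v : C) :
  `|y| = 1 -> `|z| = 1 -> `|u| = 1 -> `|v| = 1 -> y + z = u + v -> u + v != 0 ->
  y = (if y == u then u else v) /\ z = (if y == u then v else u).
Proof.
move=> hy hz hu hv e nz.
have yn := unit_neq0 hy; have zn := unit_neq0 hz.
have un := unit_neq0 hu; have vn := unit_neq0 hv.
have ec : y^* + z^* = u^* + v^* by rewrite -!jcD e.
rewrite !conj_unit // in ec.
have epr : y * z = u * v.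
  have h1 : (y + z) * (u * v) = (u + v) * (y * z).
    have : (y^-1 + z^-1) * (y * z * u * v) = (u^-1 + v^-1) * (y * z * u * v) by rewrite ec.
    have -> : (y^-1 + z^-1) * (y * z * u * v) = (y + z) * (u * v).
    by fld.
    have -> : (u^-1 + v^-1) * (y * z * u * v) = (u + v) * (y * z) by fld.
    done.
  have nz' : y + z != 0 by rewrite e.
  by apply: (mulfI nz'); rewrite h1 e.
have : (y - u) * (y - v) = 0.
  have -> : (y - u) * (y - v) = y * y - (u + v) * y + u * v by ring.
  rewrite -e -epr; ring.
move/eqP; rewrite mulf_eq0 !subr_eq0 => /orP[/eqP yu|/eqP yv].
  rewrite yu eqxx; split => //.
  by apply: (addrI u); rewrite -e yu.
case: (eqVneq y u) => [yu|nyu].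
  rewrite yu; split => //.
  by apply: (addrI u); rewrite -e yu.
split => //.
by apply: (addrI y); rewrite e yv addrC.
Qed.

Lemma wmul2 (C : numClosedFieldType) (c d : C) :
  (omega C ^+ 2 * c) * (omega C ^+ 2 * d)^* = c * d^*.
Proof.
rewrite jcM conj_w2.
have -> : omega C ^+ 2 * c * (omega C * d^*) = omega C ^+ 3 * (c * d^*) by ring.
by rewrite w3 mul1r.
Qed.

Lemma wmul1 (C : numClosedFieldType) (c d : C) :
  (omega C * c) * (omega C * d)^* = c * d^*.
Proof.
rewrite jcM conj_w.
have -> : omega C * c * (omega C ^+ 2 * d^*) = omega C ^+ 3 * (c * d^*) by ring.
by rewrite w3 mul1r.
Qed.

Definition rowv (C : numClosedFieldType) (a : C) (s1 s2 : bool) (i : 'I_6) : C :=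
  nth 0 [:: 1; a; omega C ^+ 2 * (if s1 then 1 else a); omega C ^+ 2 * (if s1 then a else 1);
           omega C * (if s2 then 1 else a); omega C * (if s2 then a else 1)] i.

Arguments rowv {C}.

Lemma inner_cond (C : numClosedFieldType) (a b : C) (s1 s2 t1 t2 : bool) :
  `|a| = 1 -> `|b| = 1 ->
  \sum_(i < 6) rowv a s1 s2 i * (rowv b t1 t2 i)^* = 0 ->
  let k := ((s1 != t1) + (s2 != t2))%N in
  (k = 0%N -> a + b = 0) /\ (k = 1%N -> 2 * a + 2 * b + a * b + 1 = 0) /\
  (k = 2%N -> a + b + 2 * a * b + 2 = 0).
Proof.
move=> ha hb.
have an := unit_neq0 ha; have bn := unit_neq0 hb.
rewrite !big_ord_recl big_ord0 /rowv /= !wmul2 !wmul1 !jc1 !(conj_unit hb).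
have h3 : (3 : C) != 0 by rewrite pnatr_eq0.
case: s1; case: s2; case: t1; case: t2 => /= E; rewrite ?jc1 ?(conj_unit hb) in E; (split; last split); move=> K; try discriminate K.
all: first [ by rewrite -(mulr0 b) -E; fld
  | (have h : 3 * (a + b) = 0 by rewrite -(mulr0 b) -E; fld);
    by move/eqP: h; rewrite mulf_eq0 (negPf h3) /= => /eqP ].
Qed.

Set Implicit Arguments. Unset Strict Implicit.
Arguments conj_unit {C z}.
Arguments unit_neq0 {C x}.
Arguments cube_root {C z}.
Arguments rowv {C}.
Arguments T {C n}.

Arguments pair_lemma {C y z u v}.
Arguments block_lemma {C S P Q}.

Lemma perm_of_list (l : seq 'I_6) (u : uniq l) (sz : size l = 6%N) :
  exists p : 'S_6, forall i, p i = nth ord0 l i.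
Proof.
have inj : injective (fun i : 'I_6 => nth ord0 l i).
  move=> i j /eqP; rewrite nth_uniq ?sz // => /eqP; apply: val_inj.
by exists (perm inj) => i; rewrite permE.
Qed.

Lemma sum6 (C : numClosedFieldType) (F : 'I_6 -> C) l : uniq l -> size l = 6%N ->
  \sum_j F j = \sum_(i < 6) F (nth ord0 l i).
Proof.
move=> u sz; have [p hp] := perm_of_list u sz.
rewrite (reindex_perm p); apply: eq_bigr => i _; by rewrite hp.
Qed.

Lemma K6_of_T (C : numClosedFieldType) (H : 'M[C]_6) s t u v :
  complex_hadamard H -> (forall i, `|u i| = 1) -> (forall j, `|v j| = 1) ->
  dephased (T H s t u v) ->
  (exists i j : 'I_6, i != ord0 /\ j != ord0 /\ T H s t u v i j = -1) -> in_K6_3 H.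
Proof.
move=> hH hu hv hd hc; exists (T H s t u v); split; first exact: had_T.
split => //; split => //; exact: equiv_T.
Qed.

Lemma orth (C : numClosedFieldType) (H : 'M[C]_6) x y : complex_hadamard H -> x != y ->
  \sum_j H x j * (H y j)^* = 0.
Proof. by move=> [_ /had_entries ho] xy; rewrite ho (negPf xy). Qed.

Lemma other_row (C : numClosedFieldType) (H : 'M[C]_6) r j1 k k' m m' x :
  complex_hadamard H -> dephased H -> uniq [:: ord0; j1; k; k'; m; m'] ->
  H r j1 = 1 -> H r k = omega C -> H r k' = omega C -> H r m = omega C ^+ 2 -> H r m' = omega C ^+ 2 ->
  x != ord0 -> x != r -> H x j1 != -1 ->
  forall i : 'I_6, H x (nth ord0 [:: ord0; j1; k; k'; m; m'] i) =
     rowv (H x j1) (H x k == omega C ^+ 2) (H x m == omega C) i.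
Proof.
move=> hH hd u hj1 hk hk' hm hm' x0 xr xj1.
have hn := hH.1.
have o0 := orth hH x0; have or := orth hH xr.
rewrite (sum6 _ u) // !big_ord_recl big_ord0 /= in o0.
rewrite (sum6 _ u) // !big_ord_recl big_ord0 /= in or.
have hd0 : forall j, H ord0 j = 1 by move=> j; case: (hd j).
have hdx : H x ord0 = 1 by case: (hd x).
have hr0 : H r ord0 = 1 by case: (hd r).
rewrite !hd0 !jc1 !mulr1 addr0 in o0.
rewrite hr0 hj1 hk hk' hm hm' jc1 conj_w conj_w2 !mulr1 addr0 hdx in or.
rewrite hdx in o0.
set a := H x j1 in o0 or xj1 *.
have [eP eQ] : H x k + H x k' = omega C ^+ 2 * (1 + a) /\ H x m + H x m' = omega C * (1 + a).
  apply: block_lemma.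
    by rewrite -o0; ring.
  by rewrite -or; ring.
have S0 : 1 + a != 0.
  by apply: contra xj1; rewrite addrC addr_eq0 => /eqP ->.
have hw2 : `|omega C ^+ 2| = 1 by rewrite normrX norm_w expr1n.
have ha : `|a| = 1 by apply: hn.
have hwa2 : `|omega C ^+ 2 * a| = 1 by rewrite normrM hw2 ha mulr1.
have hwa1 : `|omega C * a| = 1 by rewrite normrM norm_w ha mulr1.
have e2 : H x k + H x k' = omega C ^+ 2 + omega C ^+ 2 * a by rewrite eP; ring.
have e1 : H x m + H x m' = omega C + omega C * a by rewrite eQ; ring.
have n2 : omega C ^+ 2 + omega C ^+ 2 * a != 0.
  by rewrite -[X in X + _]mulr1 -mulrDr mulf_neq0 // expf_neq0 // w_neq0.
have n1 : omega C + omega C * a != 0.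
  by rewrite -[X in X + _]mulr1 -mulrDr mulf_neq0 // w_neq0.
have [p1 p2] := pair_lemma (hn x k) (hn x k') hw2 hwa2 e2 n2.
have [q1 q2] := pair_lemma (hn x m) (hn x m') (norm_w C) hwa1 e1 n1.
case=> [[|[|[|[|[|[|//]]]]]] ?]; rewrite /rowv /=.
- by rewrite hdx.
- by [].
- by rewrite {1}p1; case: (H x k == _); rewrite ?mulr1.
- by rewrite {1}p2; case: (H x k == _); rewrite ?mulr1.
- by rewrite {1}q1; case: (H x m == _); rewrite ?mulr1.
- by rewrite {1}q2; case: (H x m == _); rewrite ?mulr1.
Qed.

Arguments rowv {C}.
Arguments T {C n}.

Definition zrow (C : numClosedFieldType) (j : 'I_6) : C :=
  nth 0 [:: 1; 1; omega C ^+ 1; omega C ^+ 1; omega C ^+ 2; omega C ^+ 2] j.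

Definition mtab (C : numClosedFieldType) (e : nat) (i j : 'I_6) : C :=
  nth (fun _ => 0) [:: (fun _ => 1); zrow C;
     rowv (omega C ^+ (2 * e)) false false; rowv (omega C ^+ e) false true;
     rowv (omega C ^+ e) true false; rowv (omega C ^+ (2 * e)) true true] i j.

Lemma wmod (C : numClosedFieldType) n : omega C ^+ n = omega C ^+ (n %% 3)%N.
Proof.
rewrite {1}(divn_eq n 3) exprD mulnC exprM w3 expr1n mul1r //.
Qed.

Lemma weq (C : numClosedFieldType) n m : (n %% 3 = m %% 3)%N -> omega C ^+ n = omega C ^+ m.
Proof. by move=> h; rewrite wmod h -wmod. Qed.

Lemma weq1 (C : numClosedFieldType) n : (n %% 3 = 0)%N -> omega C ^+ n = 1.
Proof. by move=> h; rewrite wmod h expr0. Qed.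

Lemma weq1' (C : numClosedFieldType) n : (n %% 3 = 0)%N -> 1 = omega C ^+ n.
Proof. by move=> h; rewrite wmod h expr0. Qed.

Lemma norm_wn (C : numClosedFieldType) n : `|omega C ^+ n| = 1.
Proof. by rewrite normrX norm_w expr1n. Qed.

Ltac wclose := rewrite ?mul1r ?mulr1; try rewrite -[omega _]expr1; rewrite -?exprM -?exprD;
  first [ done | (apply: weq; done) | (apply: weq1; done) | (apply: weq1'; done) ].

Notation o0 := (@Ordinal 6 0 isT).
Notation o1 := (@Ordinal 6 1 isT).
Notation o2 := (@Ordinal 6 2 isT).
Notation o3 := (@Ordinal 6 3 isT).
Notation o4 := (@Ordinal 6 4 isT).
Notation o5 := (@Ordinal 6 5 isT).

Lemma final_e1 (C : numClosedFieldType) (H : 'M[C]_6) (rho pi : 'S_6) :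
  (forall i j, H (rho i) (pi j) = mtab C 1 i j) -> hadamard_equiv H (S6_0 C).
Proof.
move=> tab.
have [tau htau] := @perm_of_list [:: o1; o0; o3; o4; o5; o2] isT (erefl _).
have -> : S6_0 C = T H rho (tau * pi)%g (fun i => omega C ^+ (nth 0%N [:: 0; 0; 1; 2; 2; 1]%N i)) (fun _ => 1).
  apply/matrixP => i j; rewrite /S6_0 !mxE permM htau tab.
  case: i => [[|[|[|[|[|[|//]]]]]] ?]; case: j => [[|[|[|[|[|[|//]]]]]] ?];
    rewrite /mtab /zrow /rowv /=; wclose.
by apply: equiv_T => i; rewrite ?norm_wn ?normr1.
Qed.

Lemma final_e2 (C : numClosedFieldType) (H : 'M[C]_6) (rho pi : 'S_6) :
  (forall i j, H (rho i) (pi j) = mtab C 2 i j) -> hadamard_equiv H (S6_0 C).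
Proof.
move=> tab.
have [tau htau] := @perm_of_list [:: o0; o1; o2; o5; o4; o3] isT (erefl _).
have -> : S6_0 C = T H rho (tau * pi)%g (fun _ => 1) (fun _ => 1).
  apply/matrixP => i j; rewrite /S6_0 !mxE permM htau tab.
  case: i => [[|[|[|[|[|[|//]]]]]] ?]; case: j => [[|[|[|[|[|[|//]]]]]] ?];
    rewrite /mtab /zrow /rowv /=; wclose.
by apply: equiv_T => i; rewrite ?norm_wn ?normr1.
Qed.
Arguments conj_unit {C z}.
Arguments unit_neq0 {C x}.
Arguments cube_root {C z}.
Arguments rowv {C}.
Arguments T {C n}.
Arguments pair_lemma {C y z u v}.
Arguments block_lemma {C S P Q}.
Arguments row_struct {C z}.
Arguments inner_cond {C a b s1 s2 t1 t2}.

Lemma two_plus (C : numClosedFieldType) (x : C) : `|x| = 1 -> 2 + x != 0.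
Proof.
move=> h; apply/eqP => e.
have ex : x = - 2.
  have -> : x = (2 + x) - 2 by ring.
  by rewrite e sub0r.
 move: h; rewrite ex normrN (normr_nat C 2) => /eqP.
by rewrite pnatr_eq1.
Qed.

Lemma sq_lemma (C : numClosedFieldType) (x y : C) : `|y| = 1 ->
  2 * x + 2 * y + x * y + 1 = 0 -> y ^+ 2 + y + 1 = 0 -> x = y ^+ 2.
Proof.
move=> hy e1 e2.
have : (x - y ^+ 2) * (2 + y) = 0.
  have -> : (x - y ^+ 2) * (2 + y) = (2 * x + 2 * y + x * y + 1) - (y + 1) * (y ^+ 2 + y + 1) by ring.
  by rewrite e1 e2 mulr0 subr0.
move/eqP; rewrite mulf_eq0 (negPf (two_plus hy)) orbF subr_eq0 => /eqP //.
Qed.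

Lemma root3 (C : numClosedFieldType) (b : C) : b ^+ 2 + b + 1 = 0 ->
  b = omega C \/ b = omega C ^+ 2.
Proof.
move=> e.
have : (b - omega C) * (b - omega C ^+ 2) = 0.
  have -> : (b - omega C) * (b - omega C ^+ 2) =
    (b ^+ 2 + b + 1) - b * (omega C ^+ 2 + omega C + 1) + (omega C ^+ 3 - 1) by ring.
  by rewrite e w_root w3; ring.
by move/eqP; rewrite mulf_eq0 !subr_eq0 => /orP[/eqP ->|/eqP ->]; [left|right].
Qed.

Lemma row_case (C : numClosedFieldType) (H : 'M[C]_6) r :
  complex_hadamard H -> dephased H -> r != ord0 -> (forall j, H r j ^+ 3 = 1) ->
  hadamard_equiv H (S6_0 C) \/ in_K6_3 H.
Proof.
move=> hH hd r0 hr3.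
have hn := hH.1.
have hd0 : forall j, H ord0 j = 1 by move=> j; case: (hd j).
have hdc : forall i, H i ord0 = 1 by move=> i; case: (hd i).
case: (boolP [exists i, exists j, (i != ord0) && (j != ord0) && (H i j == -1)]).
  move=> /existsP[i /existsP[j /andP[/andP[i0 j0] /eqP e]]].
  right; apply: (@K6_of_T _ _ 1%g 1%g (fun=> 1) (fun=> 1) hH).
  - by move=> _; rewrite normr1.
  - by move=> _; rewrite normr1.
  - by move=> l; rewrite !mxE !perm1 !mul1r !mulr1; exact: hd l.
  - by exists i, j; rewrite !mxE !perm1 mul1r mulr1.
move=> noneg.
have noneg' : forall i j, i != ord0 -> j != ord0 -> H i j != -1.
  move=> i j i0 j0; apply/negP => e; move/negP: noneg; apply.
  by apply/existsP; exists i; apply/existsP; exists j; rewrite i0 j0 e.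
have zs : \sum_j H r j = 0.
  by have := orth hH r0; under eq_bigr do rewrite hd0 jc1 mulr1.
have [j1 [k [k' [m [m' [u [zj1 zk zk' zm zm']]]]]]] := row_struct (hdc r) hr3 zs.
have j10 : j1 != ord0 by apply: contraTneq u => ->.
have [pi hpi] := perm_of_list u (erefl _).
set s1 := fun x => H x k == omega C ^+ 2.
set s2 := fun x => H x m == omega C.
set a := fun x => H x j1.
have rep : forall x, x != ord0 -> x != r -> forall i, H x (pi i) = rowv (a x) (s1 x) (s2 x) i.
  move=> x x0 xr i; rewrite hpi; apply: (@other_row _ H r) => //; exact: noneg'.
have ha : forall x, `|a x| = 1 by move=> x; apply: hn.
have inner : forall x y, x != ord0 -> x != r -> y != ord0 -> y != r -> x != y ->
    \sum_(i < 6) rowv (a x) (s1 x) (s2 x) i * (rowv (a y) (s1 y) (s2 y) i)^* = 0.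
  move=> x y x0 xr y0 yr xy.
  transitivity (\sum_j H x j * (H y j)^*); last exact: orth hH xy.
  rewrite [RHS](reindex_perm pi).
  by apply: eq_bigr => i _; rewrite !rep.
case: (boolP [exists x, exists y, [&& x != ord0, x != r, y != ord0, y != r, x != y &
                 (s1 x == s1 y) && (s2 x == s2 y)]]).
  move=> /existsP[x /existsP[y /and5P[x0 xr y0 yr /andP[xy /andP[/eqP e1 /eqP e2]]]]].
  have [c0 _] := inner_cond (ha x) (ha y) (inner x y x0 xr y0 yr xy).
  have exy : a y = - a x.
    by apply/eqP; rewrite -addr_eq0 addrC c0 // e1 e2 !eqxx.
  right; apply: (@K6_of_T _ _ (tperm ord0 x) 1%g (fun=> 1) (fun j => (H x j)^*) hH).
  - by move=> _; rewrite normr1.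
  - by move=> j; rewrite norm_conjC.
  - move=> l; rewrite !mxE !perm1 !mul1r tpermL !hdc jc1 mulr1; split => //.
    by rewrite -normCK hn expr1n.
  - have ty : tperm ord0 x y = y by rewrite tpermD // eq_sym.
    exists y, j1; split => //; split => //; rewrite !mxE !perm1 mul1r ty.
    have := exy; rewrite /a => ->.
    by rewrite mulNr -normCK hn expr1n.
move=> nocol.
set O := [set x : 'I_6 | (x != ord0) && (x != r)].
set pat := fun x => (s1 x, s2 x).
have injO : {in O &, injective pat}.
  move=> x y; rewrite !inE => /andP[x0 xr] /andP[y0 yr] [e1 e2].
  apply/eqP; apply/negPn/negP => xy; move/negP: nocol; apply.
  apply/existsP; exists x; apply/existsP; exists y.
  by rewrite x0 xr y0 yr xy e1 e2 !eqxx.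
have cO : #|O| = 4%N.
  have -> : O = ~: [set ord0; r] by apply/setP => x; rewrite !inE negb_or.
  have := cardsC [set ord0; r]; rewrite cards2 eq_sym r0 card_ord => h; lia.
have full : pat @: O = setT.
  apply/eqP; rewrite eqEcard subsetT (card_in_imset injO) cO cardsT card_prod card_bool.
  by [].
have get : forall p, exists2 x, x \in O & pat x = p.
  move=> p; have : p \in pat @: O by rewrite full inE.
  by case/imsetP => x xO ->; exists x.
have dP : forall x y, pat x != pat y -> x != y by move=> x y; apply: contra_neq => ->.
have [xff ffO eff] := get (false, false).
have [xft ftO eft] := get (false, true).
have [xtf tfO etf] := get (true, false).
have [xtt ttO ett] := get (true, true).
move: (ffO) (ftO) (tfO) (ttO); rewrite !inE => /andP[ff0 ffr] /andP[ft0 ftr] /andP[tf0 tfr] /andP[tt0 ttr].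
have [ff1 ff2] : s1 xff = false /\ s2 xff = false by case: eff.
have [ft1 ft2] : s1 xft = false /\ s2 xft = true by case: eft.
have [tf1 tf2] : s1 xtf = true /\ s2 xtf = false by case: etf.
have [tt1 tt2] : s1 xtt = true /\ s2 xtt = true by case: ett.
have d1 : xff != xft by apply: dP; rewrite eff eft.
have d2 : xff != xtf by apply: dP; rewrite eff etf.
have d3 : xff != xtt by apply: dP; rewrite eff ett.
have d4 : xft != xtf by apply: dP; rewrite eft etf.
have d5 : xft != xtt by apply: dP; rewrite eft ett.
have d6 : xtf != xtt by apply: dP; rewrite etf ett.
have [_ [E1 _]] := inner_cond (ha xff) (ha xft) (inner _ _ ff0 ffr ft0 ftr d1).
have [_ [E2 _]] := inner_cond (ha xff) (ha xtf) (inner _ _ ff0 ffr tf0 tfr d2).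
have [_ [_ E3]] := inner_cond (ha xft) (ha xtf) (inner _ _ ft0 ftr tf0 tfr d4).
have [_ [E4 _]] := inner_cond (ha xft) (ha xtt) (inner _ _ ft0 ftr tt0 ttr d5).
rewrite ff1 ff2 ft1 ft2 /= in E1; have {}E1 := E1 erefl.
rewrite ff1 ff2 tf1 tf2 /= in E2; have {}E2 := E2 erefl.
rewrite ft1 ft2 tf1 tf2 /= in E3; have {}E3 := E3 erefl.
rewrite ft1 ft2 tt1 tt2 /= in E4; have {}E4 := E4 erefl.
have eBC : a xtf = a xft.
  have : (a xft - a xtf) * (2 + a xff) = 0.
    have -> : (a xft - a xtf) * (2 + a xff) =
      (2 * a xff + 2 * a xft + a xff * a xft + 1) - (2 * a xff + 2 * a xtf + a xff * a xtf + 1) by ring.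
    by rewrite E1 E2 subrr.
  by move/eqP; rewrite mulf_eq0 (negPf (two_plus (ha xff))) orbF subr_eq0 => /eqP ->.
set b := a xft in E1 E3 E4 eBC.
have eb : b ^+ 2 + b + 1 = 0.
  have h2 : (2 : C) != 0 by rewrite pnatr_eq0.
  apply: (mulfI h2); rewrite mulr0 -[RHS]E3 eBC; ring.
have eA : a xff = b ^+ 2 by apply: sq_lemma (ha xft) E1 eb.
have eD : a xtt = b ^+ 2.
  apply: sq_lemma (ha xft) _ eb; rewrite -[RHS]E4 /b; ring.
have u2 : uniq [:: ord0; r; xff; xft; xtf; xtt].
  rewrite /= !inE !negb_or.
  rewrite (eq_sym ord0 r) r0 (eq_sym ord0 xff) ff0 (eq_sym ord0 xft) ft0 (eq_sym ord0 xtf) tf0.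
  rewrite (eq_sym ord0 xtt) tt0 (eq_sym r xff) ffr (eq_sym r xft) ftr (eq_sym r xtf) tfr (eq_sym r xtt) ttr.
  by rewrite d1 d2 d3 d4 d5 d6.
have [rho hrho] := perm_of_list u2 (erefl _).
have tabg : forall e, b = omega C ^+ e -> forall i j, H (rho i) (pi j) = mtab C e i j.
  move=> e be i j; rewrite hrho.
  have be' : a xft = omega C ^+ e by exact: be.
  case: i => [[|[|[|[|[|[|//]]]]]] ?] /=.
  - by rewrite hd0 /mtab.
  - rewrite hpi /mtab /zrow /=.
    by case: j => [[|[|[|[|[|[|//]]]]]] ?] /=; rewrite ?hdc ?zj1 ?zk ?zk' ?zm ?zm' ?expr1.
  - by rewrite rep // ff1 ff2 /mtab /= eA be -exprM mulnC.
  - by rewrite rep // ft1 ft2 /mtab /= be'.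
  - by rewrite rep // tf1 tf2 /mtab /= eBC be.
  - by rewrite rep // tt1 tt2 /mtab /= eD be -exprM mulnC.
left; case: (root3 eb) => be.
  by apply: (final_e1 (rho := rho) (pi := pi)); apply: tabg; rewrite be expr1.
by apply: (final_e2 (rho := rho) (pi := pi)); apply: tabg.
Qed.

Unset Implicit Arguments. Set Strict Implicit.
Arguments T {C n}.
Arguments had_tr {C n H}.
Arguments T_of_equiv {C n H K}.

Lemma S6sym (C : numClosedFieldType) : (S6_0 C)^T = S6_0 C.
Proof.
apply/matrixP => i j; rewrite /S6_0 !mxE.
by case: i => [[|[|[|[|[|[|//]]]]]] ?]; case: j => [[|[|[|[|[|[|//]]]]]] ?].
Qed.

Theorem lemma2p25 (C : numClosedFieldType) (H : 'M[C]_6) :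
  complex_hadamard H -> dephased H ->
  ((exists i : 'I_6, i != ord0 /\ forall j, H i j ^+ 3 = 1) \/
   (exists j : 'I_6, j != ord0 /\ forall i, H i j ^+ 3 = 1)) ->
  hadamard_equiv H (S6_0 C) \/ in_K6_3 H.
Proof.
move=> hH hd [[i [i0 hi]]|[j [j0 hj]]]; first exact: row_case hH hd i0 hi.
have hT := had_tr hH.
have hdT : dephased H^T by move=> l; rewrite !mxE; case: (hd l).
have hjT : forall l, H^T j l ^+ 3 = 1 by move=> l; rewrite mxE.
case: (row_case hT hdT j0 hjT) => [eq|k6].
  left; have [s [t [u [v [hu hv e]]]]] := T_of_equiv eq.
  have -> : S6_0 C = T H t s v u by rewrite -S6sym e T_tr trmxK.
  exact: equiv_T.
right; case: k6 => K [hK [hdK [eqK [a [b [a0 [b0 ek]]]]]]].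
have [s [t [u [v [hu hv eK]]]]] := T_of_equiv eqK.
exists K^T; split; first exact: had_tr.
split; first by move=> l; rewrite !mxE; case: (hdK l).
split; first by rewrite eK T_tr trmxK; exact: equiv_T.
by exists b, a; rewrite mxE.
Qed.
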